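(* If $G$ is a connected locally Dirac graph of order $n \ge 3$, then $\lambda(G) = \delta(G)$.
   Context: $\lambda(G)$ is the edge-connectivity (minimum number of edges whose removal disconnects $G$ or leaves the trivial graph) and $\delta(G)$ the minimum degree. A graph $G$ is locally Dirac if for every vertex $v \in V(G)$ and every $u \in N(v)$, $\deg_{\langle N(v)\rangle}(u) \ge \deg_G(v)/2$, where $N(v)$ is the open neighbourhood of $v$ and $\langle N(v)\rangle$ the subgraph induced by it. *)

(* Defs.v *)
From mathcomp Require Import all_boot.
Set Implicit Arguments. Unset Strict Implicit. Unset Printing Implicit Defensive.

(* A finite simple graph: vertex type T : finType, adjacency e : rel T,
   required (in the theorem) to be symmetric and irreflexive. *)
Section Graph.
Variables (T : finType) (e : rel T).

Definition nbhd (v : T) : {set T} := [set u | e v u].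
Definition deg (v : T) : nat := #|nbhd v|.

(* minimum degree delta(G) (equals 0 for the empty graph) *)
Definition min_deg : nat := \big[minn/#|T|]_(v : T) deg v.

Definition connected_graph : Prop := forall x y : T, connect e x y.

Definition edges : {set {set T}} := [set E : {set T} | [exists x, exists y, e x y && (E == [set x; y])]].

Definition del_edges (F : {set {set T}}) : rel T :=
  fun x y => e x y && ([set x; y] \notin F).

Definition disconnecting (F : {set {set T}}) : bool :=
  (F \subset edges) && ~~ [forall x, forall y, connect (del_edges F) x y].

(* edge-connectivity lambda(G): minimum size of a disconnecting edge set.
   (Default value #|edges| is only reached when no disconnecting set exists,
   i.e. for graphs with at most one vertex, irrelevant for n >= 3.) *)
Definition edge_conn : nat :=
  \big[minn/#|edges|]_(F in powerset edges | disconnecting F) #|F|.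

(* locally Dirac: for all v and u in N(v), deg_<N(v)>(u) >= deg v / 2 *)
Definition locally_dirac : Prop :=
  forall v u : T, u \in nbhd v -> deg v <= 2 * #|nbhd u :&: nbhd v|.
End Graph.

(* Main.v *)
Require Import Defs.
From mathcomp Require Import all_boot.
From mathcomp Require Import zify.

Set Implicit Arguments. Unset Strict Implicit. Unset Printing Implicit Defensive.

Lemma pair_eq (T : finType) (X : {set T}) p q p' q' :
  p \in X -> p' \in X -> q \notin X -> q' \notin X ->
  [set p; q] = [set p'; q'] -> p = p' /\ q = q'.
Proof.
move=> hp hp' hq hq' E.
have : p \in [set p'; q'] by rewrite -E set21.
have : q \in [set p'; q'] by rewrite -E set22.
rewrite !inE => /orP[/eqP qp'|/eqP ->]; first by subst; rewrite hp' in hq.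
move=> /orP[/eqP -> //|/eqP pq']; by subst; rewrite hp in hq'.
Qed.

Section Core.
Variables (T : finType) (e : rel T).
Hypotheses (esym : symmetric e) (eirr : irreflexive e) (hLD : locally_dirac e).

Lemma core (S : {set T}) (F : {set {set T}}) :
  (forall x y, e x y -> x \in S -> y \notin S -> [set x; y] \in F) ->
  (exists x y, [&& e x y, x \in S & y \notin S]) ->
  exists u, deg e u <= #|F|.
Proof.
move=> hS [x0 [y0 /and3P[exy hx hy]]].
pose side x := [set z | (z \in S) == (x \in S)].
pose a x := #|nbhd e x :\: side x|.
have hF : forall x z, z \in nbhd e x :\: side x -> [set x; z] \in F.
  move=> x z; rewrite !inE => /andP[hzx hxz].
  case hxS: (x \in S).
    by apply: hS => //; move: hzx; rewrite hxS; case: (z \in S).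
  rewrite setUC; apply: hS; first by rewrite esym.
    by move: hzx; rewrite hxS; case: (z \in S).
  by rewrite hxS.
have : exists u, forall x, a x <= a u.
  exists [arg max_(i > x0) a i]; case: arg_maxnP => // i _ hi x; exact: hi.
case=> u umax.
have aM : 1 <= a u.
  apply: leq_trans (umax x0); rewrite card_gt0; apply/set0Pn; exists y0.
  by rewrite !inE exy hx; move: hy; case: (y0 \in S).
exists u.
set N := nbhd e u.
set Au := N :&: side u.
set Bu := N :\: side u.
have hdeg : deg e u = #|Au| + a u by rewrite /deg cardsID.
have uN : u \notin N by rewrite inE eirr.
case: (leqP #|Au| (a u)) => hA.
- have hf : forall x, x \in Au -> exists y, y \in Bu :&: nbhd e x.
    move=> x hxA; apply/set0Pn; apply/negP => /eqP h0.
    have hxN : x \in N by move: hxA; rewrite /Au inE => /andP[].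
    have := hLD hxN; rewrite -/N.
    have sub : nbhd e x :&: N \subset Au :\ x.
      apply/subsetP => z; rewrite /Bu /Au /N !inE => /andP[exz hzN].
      have zx : z != x by apply/negP => /eqP zx; subst; rewrite eirr in exz.
      rewrite zx hzN /=; apply/negPn/negP => hz.
      have : z \in Bu :&: nbhd e x by rewrite /Bu /Au /N !inE hzN exz hz.
      by rewrite h0 inE.
    have := subset_leq_card sub.
    have := cardsD1 x Au; rewrite hxA add1n.
    idtac.
    rewrite /deg -/N in hdeg; move=> h1 h2 h3; rewrite /deg -/N in h3; lia.
  pose f x := odflt u [pick y in Bu :&: nbhd e x].
  have hfx : forall x, x \in Au -> f x \in Bu :&: nbhd e x.
    move=> x /hf [y hy']; rewrite /f; case: pickP => [z -> //|/(_ y)].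
    by rewrite hy'.
  pose g z := if z \in Bu then [set u; z] else [set z; f z].
  have hsu : u \in side u by rewrite inE eqxx.
  have Bns : forall z, z \in Bu -> z \notin side u by move=> z; rewrite /Bu in_setD => /andP[].
  have AnB : forall z, z \in N -> z \notin Bu -> z \in Au.
    move=> z hz hzB; rewrite /Au in_setI hz /=; move: hzB; rewrite /Bu in_setD hz andbT; by case: (z \in side u).
  have As : forall z, z \in Au -> z \in side u by move=> z; rewrite /Au in_setI => /andP[].
  have ginj : {in N &, injective g}.
    move=> z z' hz hz'; rewrite /g.
    case: ifP => hzB; case: ifP => hz'B.
    + by case/(pair_eq hsu hsu (Bns _ hzB) (Bns _ hz'B)).
    + have hA' := AnB _ hz' (negbT hz'B).
      have := hfx _ hA'; rewrite in_setI => /andP[hfB _].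
      case/(pair_eq hsu (As _ hA') (Bns _ hzB) (Bns _ hfB)) => uz' _.
      by subst; rewrite hz' in uN.
    + have hA' := AnB _ hz (negbT hzB).
      have := hfx _ hA'; rewrite in_setI => /andP[hfB _].
      case/(pair_eq (As _ hA') hsu (Bns _ hfB) (Bns _ hz'B)) => uz' _.
      by subst; rewrite hz in uN.
    + have hA1 := AnB _ hz (negbT hzB).
      have hA2 := AnB _ hz' (negbT hz'B).
      have := hfx _ hA1; rewrite in_setI => /andP[hfB1 _].
      have := hfx _ hA2; rewrite in_setI => /andP[hfB2 _].
      by case/(pair_eq (As _ hA1) (As _ hA2) (Bns _ hfB1) (Bns _ hfB2)).
  have gsub : g @: N \subset F.
    apply/subsetP => E /imsetP [z hz ->]; rewrite /g; case: ifP => hzB.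
      by apply: hF.
    have hA' := AnB _ hz (negbT hzB).
    have := hfx _ hA'; rewrite in_setI => /andP[hfB hzf].
    apply: hF; rewrite in_setD hzf andbT.
    move: (Bns _ hfB) (As _ hA'); rewrite !inE.
    by case: (f z \in S); case: (z \in S); case: (u \in S).
  by rewrite /deg -/N -(card_in_imset ginj); apply: subset_leq_card.
- have hyy : forall y, y \in Bu -> #|Au| + 4 <= 2 * a y + a u.
    move=> y hyB.
    have hyN : y \in N by move: hyB; rewrite /Bu in_setD => /andP[].
    have hys : y \notin side u by move: hyB; rewrite /Bu in_setD => /andP[].
    set K := nbhd e y :&: Au.
    have s1 : nbhd e y :&: N \subset K :|: (Bu :\ y).
      apply/subsetP => z; rewrite in_setI => /andP[eyz hzN].
      rewrite in_setU /K in_setI eyz /= /Au in_setI hzN /= in_setD1 /Bu in_setD hzN andbT.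
      case: (z \in side u) => //=.
      by rewrite ?andbT; apply/eqP => zy; subst; move: eyz; rewrite inE eirr.
    have s2 : u |: K \subset nbhd e y :\: side y.
      apply/subsetP => z; rewrite in_setU1 => /orP[/eqP ->|].
        move: hyN hys; rewrite in_setD !inE => euy hys'; rewrite esym euy andbT.
        by move: hys'; case: (y \in S); case: (u \in S).
      rewrite /K in_setI /Au in_setI => /andP[eyz /andP[_ hzs]].
      rewrite in_setD eyz andbT; move: hys hzs; rewrite !inE.
      by case: (y \in S); case: (u \in S); case: (z \in S).
    have uK : u \notin K by rewrite /K /Au !in_setI (negbTE uN) !andbF.
    have c2 := subset_leq_card s2; rewrite cardsU1 uK add1n in c2.
    have c1 := subset_leq_card s1.
    have [c3 _] := leq_card_setU K (Bu :\ y).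
    have c4 := cardsD1 y Bu; rewrite hyB add1n in c4.
    have c5 := hLD hyN; rewrite /deg -/N in c5.
    rewrite /deg -/N in hdeg.
    have eau : a u = #|Bu| by [].
    have eay : a y = #|nbhd e y :\: side y| by [].
    lia.
  pose P := [set p : T * T | (p.1 \in Bu) && (p.2 \in nbhd e p.1 :\: side p.1)].
  have cP : #|P| = \sum_(y in Bu) a y.
    rewrite -sum1_card.
    rewrite (eq_bigl (fun p : T * T => (p.1 \in Bu) && (p.2 \in nbhd e p.1 :\: side p.1)));
      last by move=> p; rewrite /Bu /Au /N inE.
    rewrite -(pair_big_dep (fun y => y \in Bu) (fun y z => z \in nbhd e y :\: side y) (fun _ _ => 1)).
    by apply: eq_bigr => y _; rewrite sum1_card.
  have PF : #|P| <= #|F|.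
    have hinj : {in P &, injective (fun p : T * T => [set p.1; p.2])}.
      move=> [p1 p2] [q1 q2] hp hq; move: hp hq; rewrite /P in_set /= => /andP[hp1 hp2]; rewrite in_set /= => /andP[hq1 hq2] E.
      have X1 : forall y z, y \in Bu -> z \in nbhd e y :\: side y -> y \in ~: side u /\ z \notin ~: side u.
        move=> y z; rewrite /Bu /Au /N !inE => /andP[hs _] /andP[hzs _]; split => //.
        by move: hs hzs; case: (y \in S); case: (u \in S); case: (z \in S).
      case: (X1 _ _ hp1 hp2) => h1 h2; case: (X1 _ _ hq1 hq2) => h3 h4.
      by case: (pair_eq h1 h3 h2 h4 E) => -> ->.
    rewrite -(card_in_imset hinj); apply: subset_leq_card.
    apply/subsetP => E /imsetP [[p1 p2] + ->]; rewrite /Bu /Au /N inE /= => /andP[_ h].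
    exact: hF.
  have sumle : \sum_(y in Bu) (#|Au| + 4) <= \sum_(y in Bu) (2 * a y + a u).
    by apply: leq_sum => y /hyy.
  rewrite sum_nat_const big_split /= -big_distrr /= sum_nat_const -/(a u) -cP in sumle.
  have [y1 hy1] : exists y, y \in Bu by apply/set0Pn; rewrite -card_gt0.
  have := hyy _ hy1; have := umax y1.
  rewrite hdeg. move: (#|Au|) (a u) (a y1) (#|P|) hA sumle PF => A M ay p. nia.
Qed.
End Core.

Lemma bigmin_le (I : eqType) (r : seq I) (P : pred I) (F : I -> nat) d i :
  i \in r -> P i -> \big[minn/d]_(j <- r | P j) F j <= F i.
Proof.
elim: r => // x r IH; rewrite inE big_cons => /orP[/eqP->|hi] hP.
  by rewrite hP geq_minl.
case: (P x); last exact: IH.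
exact: leq_trans (geq_minr _ _) (IH hi hP).
Qed.

Theorem mainTheorem10 (T : finType) (e : rel T)
  (esym : symmetric e) (eirr : irreflexive e) :
  connected_graph e -> locally_dirac e -> 3 <= #|T| ->
  edge_conn e = min_deg e.
Proof.
move=> hcon hLD hT.
have hmin : forall v, min_deg e <= deg e v.
  by move=> v; rewrite /min_deg; apply: bigmin_le; rewrite ?mem_index_enum.
have [x0 _] : exists x : T, x \in T by apply/card_gt0P; apply: leq_trans hT.
have [v0 hv0] : exists v0, min_deg e = deg e v0.
  exists [arg min_(v < x0) deg e v]; case: arg_minnP => // v0 _ hv.
  apply/eqP; rewrite eqn_leq hmin /= /min_deg.
  apply: (big_ind (fun n => deg e v0 <= n)) => //.
  - exact: max_card.
  - by move=> m n h1 h2; rewrite leq_min h1.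
pose F0 := [set [set v0; u] | u in nbhd e v0].
have cF0 : #|F0| = deg e v0.
  rewrite card_in_imset // => u u' hu hu' E.
  have hv : v0 \in [set v0] by rewrite inE.
  have nv : forall w, w \in nbhd e v0 -> w \notin [set v0].
    by move=> w; rewrite !inE => h; apply/eqP => wv; subst; rewrite eirr in h.
  by case: (pair_eq hv hv (nv _ hu) (nv _ hu') E).
have F0e : F0 \subset edges e.
  apply/subsetP => E /imsetP [u hu ->]; rewrite inE.
  apply/existsP; exists v0; apply/existsP; exists u.
  by rewrite eqxx andbT; move: hu; rewrite inE.
have F0d : disconnecting e F0.
  rewrite /disconnecting F0e /=.
  have : 0 < #|[set~ v0]| by rewrite cardsC1; lia.
  case/card_gt0P => y; rewrite !inE => hy.
  apply/negP => /forallP /(_ v0) /forallP /(_ y) /connectP [p hp hyl].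
  case: p hp hyl => [|z p] /=.
    by move=> _ yv; rewrite yv eqxx in hy.
  rewrite /del_edges => /andP[/andP[hz hzF] _] _.
  by move/negP: hzF; apply; apply: imset_f; rewrite inE.
apply/eqP; rewrite eqn_leq; apply/andP; split.
  rewrite hv0 -cF0 /edge_conn; apply: bigmin_le; rewrite ?mem_index_enum //.
  by rewrite inE F0e F0d.
rewrite /edge_conn.
apply: (big_ind (fun n => min_deg e <= n)).
- by rewrite hv0 -cF0; apply: subset_leq_card.
- by move=> m n h1 h2; rewrite leq_min h1.
move=> F /andP[_ /andP[_ /forallPn [x /forallPn [y hxy]]]].
pose S := [set z | connect (del_edges e F) x z].
have hS : forall a b, e a b -> a \in S -> b \notin S -> [set a; b] \in F.
  move=> a b eab; rewrite !inE => ha; apply: contraR => hab.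
  apply: connect_trans ha (connect1 _); by rewrite /del_edges eab.
have hx : x \in S by rewrite inE connect0.
have hy : y \notin S by rewrite inE.
have [u hu] : exists u, deg e u <= #|F|.
  apply: (core esym eirr hLD hS).
  case: (boolP [exists a, exists b, [&& e a b, a \in S & b \notin S]]) => [/existsP [a /existsP [b h]]|/existsPn hno]; first by exists a, b.
  exfalso; move/negP: hy; apply.
  have cl : closed e S.
    move=> a b eab.
    have h1 := hno a; move/existsPn: h1 => /(_ b).
    have h2 := hno b; move/existsPn: h2 => /(_ a).
    rewrite eab esym eab /=.
    by case: (a \in S); case: (b \in S).
  by rewrite -(closed_connect cl (hcon x y)).
exact: leq_trans (hmin u) hu.
Qed.
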